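(* Let $0<q<p\le1$ and $n\in\mathbb{N}$. For $x\in[0,1]$ and $i=0,1,2$ let $e_i(t)=t^i$. Then for all $x\in[0,1]$, $$\widetilde{M}_{n,k}^{(p,q)}(e_0;x)=1,$$ $$\frac{x}{q^2}\left(1-\frac{q+1}{[n]_{p,q}}\right)\le \widetilde{M}_{n,k}^{(p,q)}(e_1;x)\le \frac{x}{q}+\frac{p^n-q^nx}{q^2[n]_{p,q}},$$ $$\widetilde{M}_{n,k}^{(p,q)}(e_2;x)\le \frac{x^2}{q^2}+\frac{(p+q)^2}{q^5}\frac{(p^n-q^nx)}{[n]_{p,q}}x+\frac{p(p+q)}{q^6}\frac{(p^n-q^nx)(p^{n-1}-q^{n-1}x)}{[n]_{p,q}[n-1]_{p,q}}.$$
   Context: For $0<q<p\le1$: $[n]_{p,q}=\frac{p^n-q^n}{p-q}$; $[n]_{p,q}!=[1]_{p,q}\cdots[n]_{p,q}$, $[0]_{p,q}!=1$; $\begin{bmatrix}n\\k\end{bmatrix}_{p,q}=\frac{[n]_{p,q}!}{[k]_{p,q}![n-k]_{p,q}!}$; $(x+y)_{p,q}^n=\prod_{j=0}^{n-1}(p^jx+q^jy)$. The $(p,q)$-integral is $\int_0^a f(t)\,d_{p,q}t=(p-q)a\sum_{j=0}^\infty \frac{q^j}{p^{j+1}}f\!\left(\frac{q^j}{p^{j+1}}a\right)$. Define $m_{n,k}^{(p,q)}(x)=\frac{1}{p^{kn+n(n+1)/2}}\begin{bmatrix}n+k\\k\end{bmatrix}_{p,q}x^k(1-x)^{n+1}_{p,q}$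 and $b_{n,k}^{(p,q)}(qt)=\frac{1}{p^{k(n-1)+n(n-1)/2}}\begin{bmatrix}n+k+1\\k\end{bmatrix}_{p,q}(qt)^k(1-qt)^n_{p,q}$. The $(p,q)$-Meyer-König-Zeller Durrmeyer operator applied to $f$ defined on $[0,1]$ is $$\widetilde{M}_{n,k}^{(p,q)}(f;x)=\frac{[n+1]_{p,q}}{p^n}\sum_{k=0}^\infty m_{n,k}^{(p,q)}(x)\,(pq)^{-k}\int_0^1 b_{n,k}^{(p,q)}(qt)f(t)\,d_{p,q}t,\quad 0\le x<1,$$ and $\widetilde{M}_{n,k}^{(p,q)}(f;1)=f(1)$ (the subscript $k$ in the notation is just part of the name; $k$ is summed over). *)

(* Defs.v *)
From Stdlib Require Import Reals Lra.
From Coquelicot Require Import Coquelicot.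
Open Scope R_scope.

Definition pq_num (p q : R) (n : nat) : R := (p ^ n - q ^ n) / (p - q).

Fixpoint pq_fact (p q : R) (n : nat) : R :=
  match n with
  | O => 1
  | S m => pq_fact p q m * pq_num p q (S m)
  end.

(* (p,q)-binomial coefficient [n choose k]_{p,q} (used with k <= n) *)
Definition pq_binom (p q : R) (n k : nat) : R :=
  pq_fact p q n / (pq_fact p q k * pq_fact p q (n - k)).

Fixpoint pq_pow (p q x y : R) (n : nat) : R :=
  match n with
  | O => 1
  | S m => pq_pow p q x y m * (p ^ m * x + q ^ m * y)
  end.

Definition pq_integral (p q : R) (f : R -> R) (a : R) : R :=
  (p - q) * a *
  Series (fun j : nat => q ^ j / p ^ (S j) * f (q ^ j / p ^ (S j) * a)).

Definition m_nk (p q : R) (n k : nat) (x : R) : R :=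
  / p ^ (k * n + (n * (n + 1)) / 2) * pq_binom p q (n + k) k * x ^ k
  * pq_pow p q 1 (- x) (n + 1).

(* b_{n,k}^{(p,q)}(u), to be evaluated at u = q t; requires n >= 1 so that
   the exponent k(n-1) + n(n-1)/2 is the natural-number one. *)
Definition b_nk (p q : R) (n k : nat) (u : R) : R :=
  / p ^ (k * (n - 1) + (n * (n - 1)) / 2) * pq_binom p q (n + k + 1) k * u ^ k
  * pq_pow p q 1 (- u) n.

Definition MKZD (p q : R) (n : nat) (f : R -> R) (x : R) : R :=
  if Rlt_dec x 1 then
    pq_num p q (n + 1) / p ^ n *
    Series (fun k : nat =>
      m_nk p q n k x * / (p * q) ^ k *
      pq_integral p q (fun t => b_nk p q n k (q * t) * f t) 1)
  else f 1.

Definition e_ (i : nat) : R -> R := fun t => t ^ i.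

(* Main.v *)
Require Import Defs.
From Stdlib Require Import Reals Lra Lia.
From Coquelicot Require Import Coquelicot.
Open Scope R_scope.

Fixpoint Nq (r : R) (m k : nat) : R :=
  match m with O => 1 | S m' => Nq r m' k * (1 - r ^ (k + m' + 1)) / (1 - r ^ (m' + 1)) end.
Fixpoint Cq (r : R) (a n : nat) : R :=
  match n with O => / (1 - r ^ a) | S n' => Cq r a n' * (1 - r ^ (n' + 1)) / (1 - r ^ (a + n' + 1)) end.
Fixpoint Pr (r y : R) (m : nat) : R :=
  match m with O => 1 | S m' => Pr r y m' * (1 - r ^ m' * y) end.
Fixpoint Kb (r : R) (m : nat) : R :=
  match m with O => 1 | S m' => Kb r m' / (1 - r ^ (m' + 1)) end.

Lemma rpow_bounds r a : 0 < r < 1 -> (0 < a)%nat -> 0 < r ^ a < 1.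
Proof. intros. split. apply pow_lt; lra. apply pow_lt_1_compat; auto; lra. Qed.

Lemma om_pos r a : 0 < r < 1 -> (0 < a)%nat -> 0 < 1 - r ^ a.
Proof. intros. pose proof (rpow_bounds r a H H0). lra. Qed.

Lemma om_le1 r a : 0 < r < 1 -> 0 <= 1 - r ^ a <= 1.
Proof. intros. destruct a. simpl; lra. pose proof (rpow_bounds r (S a) H ltac:(lia)). lra. Qed.

Ltac omp r H a := let h := fresh "hp" in pose proof (om_pos r a H ltac:(lia)) as h.

Lemma Nq_R r m k : 0 < r < 1 ->
  (1 - r ^ (m + 1)) * Nq r (S m) k = (1 - r ^ (k + 1)) * Nq r m (S k).
Proof.
  intro H. induction m.
  - simpl Nq. replace (k + 0 + 1)%nat with (k+1)%nat by lia.
    replace (0+1)%nat with 1%nat by lia. rewrite pow_1. field. lra.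
  - change (Nq r (S (S m)) k) with (Nq r (S m) k * (1 - r ^ (k + S m + 1)) / (1 - r ^ (S m + 1))).
    change (Nq r (S m) (S k)) with (Nq r m (S k) * (1 - r ^ (S k + m + 1)) / (1 - r ^ (m + 1))).
    omp r H (S m + 1)%nat. omp r H (m + 1)%nat.
    replace (S k + m + 1)%nat with (k + S m + 1)%nat by lia.
    transitivity (Nq r (S m) k * (1 - r ^ (k + S m + 1))). field. lra.
    replace ((1 - r ^ (k + 1)) * (Nq r m (S k) * (1 - r ^ (k + S m + 1)) / (1 - r ^ (m + 1))))
      with (((1 - r ^ (k + 1)) * Nq r m (S k)) * (1 - r ^ (k + S m + 1)) / (1 - r ^ (m + 1))) by (field; lra).
    rewrite <- IHm. field. lra.
Qed.

Lemma Nq_pascal r m k : 0 < r < 1 ->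
  Nq r (S m) (S k) = Nq r m (S k) + r ^ (S m) * Nq r (S m) k.
Proof.
  intro H. pose proof (Nq_R r m k H) as R1.
  omp r H (m + 1)%nat.
  assert (E : Nq r (S m) k = (1 - r ^ (k + 1)) * Nq r m (S k) / (1 - r ^ (m + 1))).
  { rewrite <- R1. field. lra. }
  rewrite E. change (Nq r (S m) (S k)) with (Nq r m (S k) * (1 - r ^ (S k + m + 1)) / (1 - r ^ (m + 1))).
  replace (S k + m + 1)%nat with ((k+1) + (m+1))%nat by lia.
  replace (S m) with (m+1)%nat by lia.
  rewrite pow_add. field. lra.
Qed.

Lemma Nq_bound r m k : 0 < r < 1 -> 0 <= Nq r m k <= Kb r m.
Proof.
  intro H. induction m; simpl Nq; simpl Kb. lra.
  omp r H (m + 1)%nat. pose proof (om_le1 r (k + m + 1) H).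
  split.
  - apply Rmult_le_pos. apply Rmult_le_pos; lra. left. apply Rinv_0_lt_compat. lra.
  - unfold Rdiv. apply Rmult_le_compat_r. left. apply Rinv_0_lt_compat. lra.
    replace (Kb r m) with (Kb r m * 1) by ring.
    apply Rmult_le_compat; lra.
Qed.

Lemma is_series_R_scal (c : R) (a : nat -> R) (l : R) : is_series a l -> is_series (fun k => c * a k) (c * l).
Proof. intro. apply (is_series_scal c a l H). Qed.

Lemma is_series_R_minus (a b : nat -> R) (la lb : R) : is_series a la -> is_series b lb ->
  is_series (fun k => a k - b k) (la - lb).
Proof. intros. apply (is_series_minus a b la lb H H0). Qed.

Lemma is_series_R_plus (a b : nat -> R) (la lb : R) : is_series a la -> is_series b lb ->
  is_series (fun k => a k + b k) (la + lb).
Proof. intros. apply (is_series_plus a b la lb H H0). Qed.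

Lemma is_series_R_decr (a : nat -> R) (l : R) : is_series (fun k => a (S k)) (l - a O) -> is_series a l.
Proof. intro. apply is_series_decr_1. exact H. Qed.

Lemma is_series_R_incr (a : nat -> R) (l : R) : is_series a l -> is_series (fun k => a (S k)) (l - a O).
Proof. intro. apply is_series_incr_1.
  match goal with |- is_series _ ?L => replace L with l end. exact H.
  unfold plus; simpl. ring. Qed.

Lemma Nq_0 r m : 0 < r < 1 -> Nq r m 0 = 1.
Proof. intro H. induction m. reflexivity. simpl Nq. rewrite IHm.
  replace (0 + m + 1)%nat with (m+1)%nat by lia. omp r H (m+1)%nat. field. lra. Qed.

Lemma Pr_pos r x m : 0 < r < 1 -> 0 <= x < 1 -> 0 < Pr r x m.
Proof. intros H Hx. induction m; simpl. lra.
  apply Rmult_lt_0_compat. auto. pose proof (pow_le r m ltac:(lra)).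
  assert (r ^ m <= 1). { destruct m. simpl; lra. pose proof (rpow_bounds r (S m) H ltac:(lia)). lra. }
  assert (r ^ m * x <= 1 * x) by (apply Rmult_le_compat_r; lra). lra. Qed.

Lemma series_eq (f : nat -> R) l1 l2 : is_series f l1 -> is_series f l2 -> l1 = l2.
Proof. intros. apply is_series_unique in H. apply is_series_unique in H0. congruence. Qed.

Lemma NB r x m : 0 < r < 1 -> 0 <= x < 1 ->
  is_series (fun k => Nq r m k * x ^ k) (/ Pr r x (S m)).
Proof.
  intros H Hx. induction m.
  - simpl. replace (/ (1 * (1 - 1 * x))) with (/ (1 - x)) by (f_equal; ring).
    eapply is_series_ext. 2: apply is_series_geom. intro k; simpl; ring.
    rewrite Rabs_right; lra.
  - assert (EX : ex_series (fun k => Nq r (S m) k * x ^ k)).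
    { apply (@ex_series_le R_AbsRing R_CompleteNormedModule _ (fun k => Kb r (S m) * x ^ k)).
      intro k. change (Rabs (Nq r (S m) k * x ^ k) <= Kb r (S m) * x ^ k). pose proof (Nq_bound r (S m) k H). pose proof (pow_le x k ltac:(lra)).
      rewrite Rabs_right. apply Rmult_le_compat_r; lra. apply Rle_ge, Rmult_le_pos; lra.
      exists (Kb r (S m) * / (1 - x)). apply (is_series_R_scal _ (fun k => x ^ k)).
      apply is_series_geom. rewrite Rabs_right; lra. }
    destruct EX as [Sv HS].
    pose proof (is_series_R_incr _ _ HS) as HS1. cbv beta in HS1.
    pose proof (is_series_R_incr _ _ IHm) as IH1. cbv beta in IH1.
    pose proof (is_series_R_plus _ _ _ _ IH1 (is_series_R_scal (r ^ S m * x) _ _ HS)) as HP.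
    assert (E : Sv - Nq r (S m) 0 * x ^ 0 = / Pr r x (S m) - Nq r m 0 * x ^ 0 + r ^ S m * x * Sv).
    { apply (series_eq _ _ _ HS1). eapply is_series_ext. 2: exact HP.
      intro k. cbv beta. rewrite (Nq_pascal r m k H). simpl pow. match goal with |- ?a = ?b => change (@eq R a b) end. ring. }
    rewrite !Nq_0 in E by auto. simpl pow in E.
    pose proof (Pr_pos r x (S m) H Hx).
    assert (0 < 1 - r ^ S m * x).
    { pose proof (rpow_bounds r (S m) H ltac:(lia)). assert (r ^ S m * x <= r ^ S m * 1) by (apply Rmult_le_compat_l; lra). lra. }
    replace (/ Pr r x (S (S m))) with Sv. exact HS.
    change (Pr r x (S (S m))) with (Pr r x (S m) * (1 - r ^ S m * x)).
    apply (Rmult_eq_reg_r (Pr r x (S m) * (1 - r ^ S m * x))).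
    2: apply Rgt_not_eq, Rmult_lt_0_compat; lra.
    rewrite Rinv_l. 2: apply Rgt_not_eq, Rmult_lt_0_compat; lra.
    apply (Rmult_eq_reg_r (/ Pr r x (S m))). 2: apply Rinv_neq_0_compat; lra.
    replace (Sv * (Pr r x (S m) * (1 - r ^ S m * x)) * / Pr r x (S m)) with (Sv - r ^ S m * x * Sv) by (field; lra).
    simpl pow in *. lra.
Qed.

Ltac Req := match goal with |- ?a = ?b => change (@eq R a b) end.

Lemma Cq_shift r n a : 0 < r < 1 -> (1 <= a)%nat ->
  Cq r (S a) n * (1 - r ^ (a + n + 1)) = Cq r a n * (1 - r ^ a).
Proof.
  intros H Ha. induction n.
  - simpl Cq. replace (a + 0 + 1)%nat with (S a) by lia.
    omp r H (S a). omp r H a. simpl pow in *. field. lra.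
  - simpl Cq. replace (a + S n + 1)%nat with (S (a + n + 1))%nat by lia.
    omp r H (S (a + n + 1))%nat. omp r H (a + n + 1)%nat. omp r H a.
    assert (E : Cq r (S a) n = Cq r a n * (1 - r ^ a) / (1 - r ^ (a + n + 1))).
    { rewrite <- IHn. field. lra. }
    rewrite E. simpl pow in *. field. lra.
Qed.

Lemma Cq_rec r n a : 0 < r < 1 -> (1 <= a)%nat ->
  Cq r a (S n) = Cq r a n - r ^ (S n) * Cq r (S a) n.
Proof.
  intros H Ha. omp r H (a + n + 1)%nat. omp r H a.
  assert (E : Cq r (S a) n = Cq r a n * (1 - r ^ a) / (1 - r ^ (a + n + 1))).
  { rewrite <- (Cq_shift r n a H Ha). field. lra. }
  rewrite E. simpl Cq. replace (a + n + 1)%nat with (a + (n + 1))%nat in * by lia.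
  replace (S n) with (n+1)%nat by lia. repeat rewrite pow_add in *. simpl pow in *. field. lra.
Qed.

Lemma Beta r n : 0 < r < 1 -> forall a, (1 <= a)%nat ->
  is_series (fun j => (r ^ a) ^ j * Pr r (r ^ (S j)) n) (Cq r a n).
Proof.
  intro H. induction n; intros a Ha.
  - simpl Cq. eapply is_series_ext. 2: apply is_series_geom.
    intro j. simpl Pr. cbv beta. Req. ring. pose proof (rpow_bounds r a H ltac:(lia)). rewrite Rabs_right; lra.
  - rewrite (Cq_rec r n a H Ha).
    eapply is_series_ext. 2: apply (is_series_R_minus _ _ _ _ (IHn a Ha) (is_series_R_scal (r ^ S n) _ _ (IHn (S a) ltac:(lia)))).
    intro j. cbv beta. simpl Pr. Req.
    replace (S a) with (1 + a)%nat by lia. rewrite pow_add, Rpow_mult_distr.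
    replace (S n) with (1 + n)%nat by lia. replace (S j) with (1 + j)%nat by lia. rewrite !pow_add, !pow_1. ring.
Qed.

Lemma Nq_Cq r m k : 0 < r < 1 -> (1 - r ^ (S m)) * Nq r (S m) k * Cq r (S k) m = 1.
Proof.
  intro H. induction m.
  - simpl Nq; simpl Cq. replace (k + 0 + 1)%nat with (S k) by lia. replace (0 + 1)%nat with 1%nat by lia.
    omp r H (S k). omp r H 1%nat. simpl pow in *. field. split; lra.
  - change (Nq r (S (S m)) k) with (Nq r (S m) k * (1 - r ^ (k + S m + 1)) / (1 - r ^ (S m + 1))).
    change (Cq r (S k) (S m)) with (Cq r (S k) m * (1 - r ^ (m + 1)) / (1 - r ^ (S k + m + 1))).
    replace (S k + m + 1)%nat with (k + S m + 1)%nat by lia.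
    replace (S (S m)) with (S m + 1)%nat by lia.
    replace (m + 1)%nat with (S m) by lia.
    omp r H (S m + 1)%nat. omp r H (k + S m + 1)%nat. omp r H (S m).
    transitivity ((1 - r^(S m)) * Nq r (S m) k * Cq r (S k) m). field. lra. exact IHm.
Qed.

Lemma L1 r n k : 0 < r < 1 -> Nq r n (S k) * (1 - r ^ (S k)) = Nq r n k * (1 - r ^ (n + S k)).
Proof.
  intro H. destruct n as [|m].
  - simpl. ring.
  - pose proof (Nq_R r m k H) as R1.
    change (Nq r (S m) (S k)) with (Nq r m (S k) * (1 - r ^ (S k + m + 1)) / (1 - r ^ (m + 1))).
    replace (S k) with (k+1)%nat at 3 by lia.
    omp r H (m+1)%nat.
    transitivity (((1 - r ^ (k + 1)) * Nq r m (S k)) * (1 - r ^ (S k + m + 1)) / (1 - r ^ (m + 1))).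
    field. lra. rewrite <- R1. replace (S k + m + 1)%nat with (S m + S k)%nat by lia. field. lra.
Qed.

Lemma L2 r m k : 0 < r < 1 -> Nq r (S m) k / (1 - r ^ (S m + k)) = Nq r m k / (1 - r ^ (S m)).
Proof.
  intro H. simpl Nq. replace (k + m + 1)%nat with (S m + k)%nat by lia. replace (m+1)%nat with (S m) by lia.
  omp r H (S m + k)%nat. omp r H (S m). field. lra.
Qed.

Lemma decr0 (a : nat -> R) (l : R) : a O = 0 -> is_series (fun k => a (S k)) l -> is_series a l.
Proof. intros. apply is_series_R_decr. rewrite H. replace (l - 0) with l by ring. auto. Qed.

Lemma SB r x n : 0 < r < 1 -> 0 <= x < 1 -> (1 <= n)%nat ->
  is_series (fun k => Nq r n k * x ^ k * (1 - r ^ k) / (1 - r ^ (n + k))) (x / Pr r x (S n)).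
Proof.
  intros H Hx Hn. apply decr0. simpl pow at 2. unfold Rdiv. ring.
  eapply is_series_ext. 2: apply (is_series_R_scal x _ _ (NB r x n H Hx)).
  intro k. cbv beta. Req. omp r H (n + S k)%nat. symmetry.
  transitivity (x * x ^ k * (Nq r n (S k) * (1 - r ^ S k)) / (1 - r ^ (n + S k))).
  simpl pow at 1. field. lra. rewrite L1 by auto. field. lra.
Qed.

Lemma SC r x m : 0 < r < 1 -> 0 <= x < 1 ->
  is_series (fun k => Nq r (S m) k * x ^ k / (1 - r ^ (S m + k))) (/ ((1 - r ^ (S m)) * Pr r x (S m))).
Proof.
  intros H Hx. omp r H (S m). pose proof (Pr_pos r x (S m) H Hx).
  replace (/ ((1 - r ^ (S m)) * Pr r x (S m))) with (/ (1 - r ^ (S m)) * / Pr r x (S m)) by (field; lra).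
  eapply is_series_ext. 2: apply (is_series_R_scal (/ (1 - r ^ (S m))) _ _ (NB r x m H Hx)).
  intro k. cbv beta. Req. omp r H (S m + k)%nat. symmetry.
  transitivity (Nq r (S m) k / (1 - r ^ (S m + k)) * x ^ k). field. lra.
  rewrite L2 by auto. field. lra.
Qed.

Lemma SD r x n : 0 < r < 1 -> 0 <= x < 1 -> (1 <= n)%nat ->
  is_series (fun k => Nq r n k * x ^ k * ((1 - r ^ k) * (1 - r ^ (k - 1)))
                        / ((1 - r ^ (n + k)) * (1 - r ^ (n + k - 1)))) (x ^ 2 / Pr r x (S n)).
Proof.
  intros H Hx Hn. apply decr0. simpl pow at 2 3. unfold Rdiv. ring.
  replace (x ^ 2 / Pr r x (S n)) with (x * (x / Pr r x (S n))) by (simpl; unfold Rdiv; ring).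
  eapply is_series_ext. 2: apply (is_series_R_scal x _ _ (SB r x n H Hx Hn)).
  intro k. cbv beta. Req.
  replace (S k - 1)%nat with k by lia. replace (n + S k - 1)%nat with (n + k)%nat by lia.
  omp r H (n + S k)%nat. omp r H (n + k)%nat. symmetry.
  transitivity (x * x ^ k * (Nq r n (S k) * (1 - r ^ S k)) * (1 - r ^ k) / ((1 - r ^ (n + S k)) * (1 - r ^ (n + k)))).
  simpl pow at 1. field. lra. rewrite L1 by auto. field. lra.
Qed.

Lemma SE r x m : 0 < r < 1 -> 0 <= x < 1 ->
  is_series (fun k => Nq r (S m) k * x ^ k * (1 - r ^ k)
                        / ((1 - r ^ (S m + k)) * (1 - r ^ (S m + k - 1))))
            (x / ((1 - r ^ (S m)) * Pr r x (S m))).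
Proof.
  intros H Hx. apply decr0. simpl pow at 2. unfold Rdiv. ring.
  replace (x / ((1 - r ^ (S m)) * Pr r x (S m))) with (x * / ((1 - r ^ (S m)) * Pr r x (S m))) by (unfold Rdiv; ring).
  eapply is_series_ext. 2: apply (is_series_R_scal x _ _ (SC r x m H Hx)).
  intro k. cbv beta. Req.
  replace (S m + S k - 1)%nat with (S m + k)%nat by lia.
  omp r H (S m + S k)%nat. omp r H (S m + k)%nat. symmetry.
  transitivity (x * x ^ k * (Nq r (S m) (S k) * (1 - r ^ S k)) / ((1 - r ^ (S m + S k)) * (1 - r ^ (S m + k)))).
  simpl pow at 1. field. lra. rewrite L1 by auto. field. lra.
Qed.

Lemma SF r x l : 0 < r < 1 -> 0 <= x < 1 ->
  is_series (fun k => Nq r (S (S l)) k * x ^ k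
                        / ((1 - r ^ (S (S l) + k)) * (1 - r ^ (S (S l) + k - 1))))
            (/ ((1 - r ^ (S (S l))) * (1 - r ^ (S l)) * Pr r x (S l))).
Proof.
  intros H Hx. omp r H (S (S l)). omp r H (S l). pose proof (Pr_pos r x (S l) H Hx).
  replace (/ ((1 - r ^ (S (S l))) * (1 - r ^ (S l)) * Pr r x (S l)))
    with (/ (1 - r ^ (S (S l))) * / ((1 - r ^ (S l)) * Pr r x (S l))) by (field; lra).
  eapply is_series_ext. 2: apply (is_series_R_scal _ _ _ (SC r x l H Hx)).
  intro k. cbv beta. Req.
  replace (S (S l) + k - 1)%nat with (S l + k)%nat by lia.
  omp r H (S (S l) + k)%nat. omp r H (S l + k)%nat. symmetry.
  transitivity (Nq r (S (S l)) k / (1 - r ^ (S (S l) + k)) * x ^ k / (1 - r ^ (S l + k))). field. lra.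
  rewrite L2 by auto. field. lra.
Qed.
Lemma sum_n_le' (a b : nat -> R) n : (forall k, a k <= b k) -> sum_n a n <= sum_n b n.
Proof. intro H. induction n. rewrite !sum_O. auto. rewrite !sum_Sn. unfold plus; simpl. specialize (H (S n)). lra. Qed.
Lemma series_cmp (a b : nat -> R) (A B : R) : is_series a A -> is_series b B -> (forall k, a k <= b k) -> A <= B.
Proof.
  intros HA HB Hab.
  assert (H1 : is_lim_seq (sum_n a) A) by exact HA.
  assert (H2 : is_lim_seq (sum_n b) B) by exact HB.
  pose proof (is_lim_seq_le _ _ _ _ (fun n => sum_n_le' a b n Hab) H1 H2). simpl in H. exact H.
Qed.

Fixpoint tri (n : nat) : nat := match n with O => O | S m => (tri m + m)%nat end.
Fixpoint fq (r : R) (a : nat) : R := match a with O => 1 | S b => fq r b * (1 - r ^ (S b)) end.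

Lemma tri2 n : (2 * tri n = n * (n - 1))%nat.
Proof. induction n. reflexivity. simpl tri. destruct n. simpl. reflexivity. nia. Qed.

Lemma tri_div1 n : (n * (n - 1) / 2 = tri n)%nat.
Proof. rewrite <- tri2. rewrite Nat.mul_comm. apply Nat.div_mul. lia. Qed.

Lemma tri_div2 n : (n * (n + 1) / 2 = tri (S n))%nat.
Proof. replace (n * (n + 1))%nat with (S n * (S n - 1))%nat by nia. apply tri_div1. Qed.

Lemma tri_add m k : (tri (m + k) = tri m + tri k + m * k)%nat.
Proof. induction k. rewrite Nat.add_0_r. simpl. lia. replace (m + S k)%nat with (S (m + k)) by lia. simpl tri. rewrite IHk. nia. Qed.

Lemma fq_pos r a : 0 < r < 1 -> 0 < fq r a.
Proof. intro H. induction a; simpl fq. lra. apply Rmult_lt_0_compat. auto. exact (om_pos r (S a) H ltac:(lia)). Qed.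

Lemma fq_Nq r m k : 0 < r < 1 -> Nq r m k * fq r m * fq r k = fq r (m + k).
Proof.
  intro H. induction m. simpl. ring.
  change (Nq r (S m) k) with (Nq r m k * (1 - r ^ (k + m + 1)) / (1 - r ^ (m + 1))).
  change (fq r (S m)) with (fq r m * (1 - r ^ (S m))).
  replace (S m + k)%nat with (S (m + k)) by lia. change (fq r (S (m + k))) with (fq r (m + k) * (1 - r ^ (S (m + k)))).
  rewrite <- IHm. replace (k + m + 1)%nat with (S (m + k)) by lia. replace (m + 1)%nat with (S m) by lia.
  omp r H (S m). field. lra.
Qed.

Lemma pq_num_r p r a : 0 < p -> 0 < r < 1 -> pq_num p (r * p) (S a) = p ^ a * (1 - r ^ (S a)) / (1 - r).
Proof. intros. unfold pq_num. assert (0 < p - r * p) by nra. rewrite Rpow_mult_distr. simpl pow. field. repeat split; lra. Qed.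

Lemma pq_fact_r p r a : 0 < p -> 0 < r < 1 -> pq_fact p (r * p) a = p ^ (tri a) * fq r a / (1 - r) ^ a.
Proof.
  intros Hp H. induction a. simpl. field.
  simpl pq_fact. rewrite IHa, pq_num_r by auto. simpl tri. rewrite pow_add. simpl fq.
  simpl pow. field. repeat split; try lra; apply pow_nonzero; lra.
Qed.

Lemma pq_binom_r p r m k : 0 < p -> 0 < r < 1 -> pq_binom p (r * p) (m + k) k = p ^ (k * m) * Nq r m k.
Proof.
  intros Hp H. unfold pq_binom. replace (m + k - k)%nat with m by lia.
  rewrite !pq_fact_r by auto. rewrite tri_add, <- fq_Nq by auto.
  rewrite !pow_add. replace (m * k)%nat with (k * m)%nat by lia.
  pose proof (fq_pos r m H). pose proof (fq_pos r k H).
  field. repeat split; try lra; apply pow_nonzero; lra.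
Qed.

Lemma pq_pow_r p r y a : 0 < p -> 0 < r < 1 -> pq_pow p (r * p) 1 (- y) a = p ^ (tri a) * Pr r y a.
Proof.
  intros Hp H. induction a. simpl. ring.
  simpl pq_pow. rewrite IHa. simpl tri. simpl Pr. rewrite pow_add, Rpow_mult_distr. ring.
Qed.

Lemma m_nk_r p r n k x : 0 < p -> 0 < r < 1 -> m_nk p (r * p) n k x = Pr r x (S n) * Nq r n k * x ^ k.
Proof.
  intros Hp H. unfold m_nk. rewrite tri_div2. replace (n + 1)%nat with (S n) by lia.
  rewrite pq_pow_r by auto. rewrite pq_binom_r by auto. rewrite pow_add.
  field. split; apply pow_nonzero; lra.
Qed.

Lemma b_nk_r p r n k u : 0 < p -> 0 < r < 1 -> (1 <= n)%nat ->
  b_nk p (r * p) n k u = p ^ (2 * k) * Nq r (S n) k * u ^ k * Pr r u n.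
Proof.
  intros Hp H Hn. unfold b_nk. rewrite tri_div1. replace (n + k + 1)%nat with (S n + k)%nat by lia.
  rewrite pq_pow_r by auto. rewrite pq_binom_r by auto.
  replace (k * S n)%nat with (k * (n - 1) + 2 * k)%nat by nia. rewrite !pow_add.
  field. split; apply pow_nonzero; lra.
Qed.

Lemma integral_r p r n k i : 0 < p -> 0 < r < 1 -> (1 <= n)%nat ->
  pq_integral p (r * p) (fun t => b_nk p (r * p) n k ((r * p) * t) * e_ i t) 1
  = (p - r * p) * (p ^ (2 * k) / p ^ (S i) * Nq r (S n) k * r ^ k * Cq r (k + 1 + i) n).
Proof.
  intros Hp H Hn. unfold pq_integral. rewrite Rmult_1_r. f_equal.
  apply is_series_unique.
  eapply is_series_ext. 2: apply (is_series_R_scal (p ^ (2 * k) / p ^ (S i) * Nq r (S n) k * r ^ k) _ _ (Beta r n H (k + 1 + i) ltac:(lia))).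
  intro j. cbv beta. Req. rewrite b_nk_r by auto. unfold e_.
  assert (E0 : (r * p) ^ j / p ^ (S j) = r ^ j / p).
  { rewrite Rpow_mult_distr. simpl pow. field. split. lra. apply pow_nonzero. lra. }
  rewrite E0. rewrite Rmult_1_r.
  assert (E2 : r * p * (r ^ j / p) = r ^ (S j)). { simpl pow. field. lra. }
  rewrite E2.
  assert (E3 : r ^ k * (r ^ (k + 1 + i)) ^ j = r ^ j * (r ^ (S j)) ^ k * (r ^ j) ^ i).
  { rewrite <- !pow_mult, <- !pow_add. f_equal. nia. }
  assert (E4 : (r ^ j / p) ^ i = (r ^ j) ^ i / p ^ i).
  { unfold Rdiv. rewrite Rpow_mult_distr, pow_inv. reflexivity. }
  rewrite E4. simpl (p ^ S i).
  transitivity (p ^ (2 * k) / (p * p ^ i) * Nq r (S n) k * (r ^ k * (r ^ (k + 1 + i)) ^ j) * Pr r (r ^ S j) n).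
  ring. rewrite E3. field. split. apply pow_nonzero; lra. lra.
Qed.

Lemma term_r p r n k i x : 0 < p -> 0 < r < 1 -> (1 <= n)%nat ->
  m_nk p (r * p) n k x * / (p * (r * p)) ^ k *
  pq_integral p (r * p) (fun t => b_nk p (r * p) n k ((r * p) * t) * e_ i t) 1
  = (p - r * p) / p ^ (S i) * (Pr r x (S n) * Nq r n k * x ^ k * (Nq r (S n) k * Cq r (k + 1 + i) n)).
Proof.
  intros Hp H Hn. rewrite integral_r, m_nk_r by auto.
  rewrite !Rpow_mult_distr. replace (2 * k)%nat with (k + k)%nat by lia. rewrite pow_add.
  field. repeat split; try apply pow_nonzero; lra.
Qed.

Lemma MKZD_r p r n i x : 0 < p -> 0 < r < 1 -> (1 <= n)%nat -> 0 <= x < 1 ->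
  MKZD p (r * p) n (e_ i) x = / p ^ i * Series (fun k => Pr r x (S n) * Nq r n k * x ^ k *
     ((1 - r ^ (S n)) * Nq r (S n) k * Cq r (k + 1 + i) n)).
Proof.
  intros Hp H Hn Hx. unfold MKZD. destruct (Rlt_dec x 1) as [_|]; [|lra].
  rewrite (Series_ext _ (fun k => (p - r * p) / p ^ (S i) * (Pr r x (S n) * Nq r n k * x ^ k * (Nq r (S n) k * Cq r (k + 1 + i) n))))
    by (intro k; apply term_r; auto).
  rewrite Series_scal_l.
  rewrite (Series_ext (fun k => Pr r x (S n) * Nq r n k * x ^ k * ((1 - r ^ (S n)) * Nq r (S n) k * Cq r (k + 1 + i) n))
     (fun k => (1 - r ^ (S n)) * (Pr r x (S n) * Nq r n k * x ^ k * (Nq r (S n) k * Cq r (k + 1 + i) n))))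
    by (intro k; ring).
  rewrite Series_scal_l. replace (n + 1)%nat with (S n) by lia. rewrite pq_num_r by auto.
  simpl (p ^ S i). field. repeat split; try apply pow_nonzero; lra.
Qed.

Lemma rho0 r n k : 0 < r < 1 -> (1 - r ^ (S n)) * Nq r (S n) k * Cq r (k + 1 + 0) n = 1.
Proof. intro H. replace (k + 1 + 0)%nat with (S k) by lia. apply Nq_Cq; auto. Qed.

Lemma rho1 r n k : 0 < r < 1 -> (1 - r ^ (S n)) * Nq r (S n) k * Cq r (k + 1 + 1) n
  = (1 - r ^ (S k)) / (1 - r ^ (S k + n + 1)).
Proof.
  intro H. replace (k + 1 + 1)%nat with (S (S k)) by lia.
  pose proof (Cq_shift r n (S k) H ltac:(lia)) as E. omp r H (S k + n + 1)%nat.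
  replace (Cq r (S (S k)) n) with (Cq r (S k) n * (1 - r ^ S k) / (1 - r ^ (S k + n + 1))) by (rewrite <- E; field; lra).
  pose proof (Nq_Cq r n k H). 
  transitivity ((1 - r ^ S n) * Nq r (S n) k * Cq r (S k) n * (1 - r ^ S k) / (1 - r ^ (S k + n + 1))). field. lra.
  rewrite H0. field. lra.
Qed.

Lemma rho2 r n k : 0 < r < 1 -> (1 - r ^ (S n)) * Nq r (S n) k * Cq r (k + 1 + 2) n
  = (1 - r ^ (S k)) / (1 - r ^ (S k + n + 1)) * ((1 - r ^ (S (S k))) / (1 - r ^ (S (S k) + n + 1))).
Proof.
  intro H. rewrite <- rho1 by auto. replace (k + 1 + 2)%nat with (S (S (S k))) by lia.
  replace (k + 1 + 1)%nat with (S (S k)) by lia.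
  pose proof (Cq_shift r n (S (S k)) H ltac:(lia)) as E. omp r H (S (S k) + n + 1)%nat.
  replace (Cq r (S (S (S k))) n) with (Cq r (S (S k)) n * (1 - r ^ S (S k)) / (1 - r ^ (S (S k) + n + 1))) by (rewrite <- E; field; lra).
  field. lra.
Qed.

Lemma le_by_diff (A B N M : R) : B - A = N / M -> 0 <= N -> 0 < M -> A <= B.
Proof. intros E HN HM. assert (0 <= N / M) by (apply Rmult_le_pos; [auto | left; apply Rinv_0_lt_compat; auto]). lra. Qed.

Lemma TU1ab r a b : 0 < r < 1 -> 0 <= a <= 1 -> 0 <= b <= r ->
  (1 - r * a) / (1 - r ^ 2 * (a * b)) <= (1 - r) / r ^ 2 / (1 - a * b) + / r * (1 - a) / (1 - a * b).
Proof.
  intros H Ha Hb. assert (0 <= a * b <= r) by nra. assert (r ^ 2 * (a*b) <= r ^ 2 * r) by (apply Rmult_le_compat_l; nra).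
  assert (0 < r ^ 2) by nra. assert (r^2 * r < 1) by nra.
  apply (le_by_diff _ _ ((1 - r * a) * (1 - r ^ 2)) (r ^ 2 * (1 - a * b) * (1 - r ^ 2 * (a * b)))).
  field. repeat split; nra. apply Rmult_le_pos; nra. apply Rmult_lt_0_compat; [apply Rmult_lt_0_compat|]; nra.
Qed.

Lemma TL1ab r a b : 0 < r < 1 -> 0 <= a <= 1 -> 0 <= b <= r ->
  (r ^ 2 - b) / (r ^ 2 * (1 - b)) * ((1 - a) / (1 - a * b)) <= (1 - r * a) / (1 - r ^ 2 * (a * b)).
Proof.
  intros H Ha Hb. assert (0 <= a * b <= r) by nra. assert (r ^ 2 * (a*b) <= r ^ 2 * r) by (apply Rmult_le_compat_l; nra).
  assert (0 < r ^ 2) by nra. assert (r^2 * r < 1) by nra.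
  apply (le_by_diff _ _ ((1-r)*(a*r*r*(1-b)^2 + b*(1-a)*((1+r) - a*r*r*(b+r))))
     (r ^ 2 * (1 - b) * (1 - a * b) * (1 - r ^ 2 * (a * b)))).
  field. repeat split; nra.
  assert (0 <= r*r*(b+r)) by (apply Rmult_le_pos; nra).
  assert (a*(r*r*(b+r)) <= 1*(r*r*(b+r))) by (apply Rmult_le_compat_r; lra).
  assert (r*r*(b+r) <= r*r*(2*r)) by (apply Rmult_le_compat_l; nra).
  assert (0 <= a*r*r*(b+r) <= 1+r) by nra.
  assert (0 <= a*r*r*(1-b)^2) by (apply Rmult_le_pos; nra).
  assert (0 <= b*(1-a)*((1+r) - a*r*r*(b+r))) by (apply Rmult_le_pos; nra).
  apply Rmult_le_pos; nra.
  apply Rmult_lt_0_compat; [apply Rmult_lt_0_compat; [apply Rmult_lt_0_compat|]|]; nra.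
Qed.

Lemma TU2acd r a c d : 0 < r < 1 -> 0 <= a <= 1 -> 0 <= d <= r ->
  (1 - r * a) * (1 - r ^ 2 * a) = (1+r)*(1-r)^2 + r*(1+r)^2*(1-r)*(1-a) + r^4*(1-a)*(1-c) ->
  (1 - r * a) / (1 - r ^ 3 * d) * ((1 - r ^ 2 * a) / (1 - r ^ 4 * d))
  <= ((1+r)*(1-r)^2 + r*(1+r)^2*(1-r)*(1-a) + r^4*(1-a)*(1-c)) / (r ^ 6 * ((1 - r * d) * (1 - d))).
Proof.
  intros H Ha Hd E. rewrite <- E.
  assert (0 < r ^ 2) by nra. assert (0 < r^3) by (simpl; nra). assert (0 < r^4) by (simpl; nra).
  assert (r^2 <= 1) by nra. assert (r^3 <= 1) by (simpl; nra). assert (r^4 <= 1) by (simpl; nra).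
  assert (X1 : r ^ 2 * (1 - r * d) <= 1 - r ^ 3 * d) by (simpl; nra).
  assert (X2 : r ^ 4 * (1 - d) <= 1 - r ^ 4 * d) by (simpl; nra).
  assert (0 < 1 - r * d) by nra. assert (0 < 1 - d) by nra.
  assert (0 <= (1 - r * a) * (1 - r ^ 2 * a)) by (apply Rmult_le_pos; nra).
  replace ((1 - r * a) / (1 - r ^ 3 * d) * ((1 - r ^ 2 * a) / (1 - r ^ 4 * d)))
    with ((1 - r * a) * (1 - r ^ 2 * a) / ((1 - r ^ 3 * d) * (1 - r ^ 4 * d))) by (field; split; nra).
  unfold Rdiv. apply Rmult_le_compat_l. auto.
  apply Rinv_le_contravar. apply Rmult_lt_0_compat; [nra|]. apply Rmult_lt_0_compat; nra.
  replace (r ^ 6 * ((1 - r * d) * (1 - d))) with ((r ^ 2 * (1 - r * d)) * (r ^ 4 * (1 - d))) by ring.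
  apply Rmult_le_compat; try nra.
Qed.

Lemma bern1 r n : 0 < r < 1 -> 1 - r ^ n <= INR n * (1 - r).
Proof. intro H. induction n. simpl. lra. rewrite S_INR. simpl pow.
  assert (r ^ n <= 1). { destruct n. simpl; lra. pose proof (rpow_bounds r (S n) H ltac:(lia)). lra. }
  pose proof (pow_le r n ltac:(lra)). nra. Qed.

Lemma pow_le_one p m : 0 <= p <= 1 -> 0 <= p ^ m <= 1.
Proof. intro H. induction m; simpl. lra. split. apply Rmult_le_pos; lra. nra. Qed.

Lemma bern2 p m : 0 < p <= 1 -> INR (S m) * (1 - p) * p ^ m <= 1 - p ^ (S m).
Proof. intro H. induction m. simpl. lra.
  pose proof (pow_le_one p (S m) ltac:(lra)).
  rewrite S_INR. change (p ^ S (S m)) with (p * p ^ (S m)). change (p ^ (S m)) with (p * p ^ m) in *.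
  pose proof (pow_le_one p m ltac:(lra)). pose proof (pos_INR (S m)).
  assert (p * (INR (S m) * (1 - p) * p ^ m) <= p * (1 - p * p ^ m)) by (apply Rmult_le_compat_l; lra).
  nra. Qed.

Lemma W_nonneg r n k x : 0 < r < 1 -> 0 <= x < 1 -> 0 <= Pr r x (S n) * Nq r n k * x ^ k.
Proof. intros. pose proof (Pr_pos r x (S n) H H0). pose proof (Nq_bound r n k H). pose proof (pow_le x k ltac:(lra)).
  apply Rmult_le_pos; [apply Rmult_le_pos|]; lra. Qed.

Lemma P_e0 p r n x : 0 < p -> 0 < r < 1 -> (1 <= n)%nat -> 0 <= x < 1 -> MKZD p (r * p) n (e_ 0) x = 1.
Proof.
  intros Hp H Hn Hx. rewrite MKZD_r by auto.
  rewrite (Series_ext _ (fun k => Pr r x (S n) * (Nq r n k * x ^ k))) by (intro; rewrite rho0 by auto; ring).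
  rewrite Series_scal_l. rewrite (is_series_unique _ _ (NB r x n H Hx)).
  pose proof (Pr_pos r x (S n) H Hx). change (p ^ 0) with 1. field. lra.
Qed.

Lemma ab_facts r k n : 0 < r < 1 -> (1 <= n)%nat -> 0 <= r ^ k <= 1 /\ 0 <= r ^ n <= r.
Proof. intros H Hn. split. apply pow_le_one; lra. split. apply pow_le; lra.
  destruct n. lia. simpl. pose proof (pow_le_one r n ltac:(lra)). nra. Qed.

Lemma P_e1 p r n x : 0 < p -> 0 < r < 1 -> (1 <= n)%nat -> 0 <= x < 1 ->
  exists S1, MKZD p (r * p) n (e_ 1) x = / p * S1 /\
    (r ^ 2 - r ^ n) / (r ^ 2 * (1 - r ^ n)) * x <= S1 /\
    S1 <= (1 - r) / r ^ 2 * ((1 - r ^ n * x) / (1 - r ^ n)) + / r * x.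
Proof.
  intros Hp H Hn Hx. destruct n as [|m]. lia.
  set (n := S m).
  set (f1 := fun k => Pr r x (S n) * Nq r n k * x ^ k * ((1 - r ^ (S k)) / (1 - r ^ (S k + n + 1)))).
  set (gU := fun k => (1 - r) / r ^ 2 * (Pr r x (S n) * (Nq r n k * x ^ k / (1 - r ^ (n + k))))
                     + / r * (Pr r x (S n) * (Nq r n k * x ^ k * (1 - r ^ k) / (1 - r ^ (n + k))))).
  set (gL := fun k => (r ^ 2 - r ^ n) / (r ^ 2 * (1 - r ^ n)) * (Pr r x (S n) * (Nq r n k * x ^ k * (1 - r ^ k) / (1 - r ^ (n + k))))).
  pose proof (Pr_pos r x (S n) H Hx) as HP. pose proof (Pr_pos r x n H Hx) as HP0.
  omp r H n.
  assert (HgU : is_series gU ((1 - r) / r ^ 2 * (Pr r x (S n) * / ((1 - r ^ n) * Pr r x n)) + / r * (Pr r x (S n) * (x / Pr r x (S n))))).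
  { apply is_series_R_plus; apply is_series_R_scal; apply is_series_R_scal. apply (SC r x m H Hx). apply (SB r x n H Hx ltac:(lia)). }
  assert (HgL : is_series gL ((r ^ 2 - r ^ n) / (r ^ 2 * (1 - r ^ n)) * (Pr r x (S n) * (x / Pr r x (S n))))).
  { apply is_series_R_scal; apply is_series_R_scal. apply (SB r x n H Hx ltac:(lia)). }
  assert (Hterm : forall k, 0 <= f1 k /\ gL k <= f1 k <= gU k).
  { intro k. pose proof (W_nonneg r n k x H Hx) as HW.
    destruct (ab_facts r k n H ltac:(lia)) as [Ha Hb].
    assert (E1 : (1 - r ^ (S k)) / (1 - r ^ (S k + n + 1)) = (1 - r * r ^ k) / (1 - r ^ 2 * (r ^ k * r ^ n))).
    { replace (S k + n + 1)%nat with (2 + (k + n))%nat by lia. rewrite !pow_add. reflexivity. }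
    assert (E2 : r ^ (n + k) = r ^ k * r ^ n) by (rewrite pow_add; ring).
    assert (0 <= r ^ k * r ^ n <= r) by nra.
    assert (0 < 1 - r ^ 2 * (r ^ k * r ^ n)) by nra.
    unfold f1, gU, gL. rewrite E1, E2.
    repeat split.
    - apply Rmult_le_pos. auto. apply Rmult_le_pos. nra. left; apply Rinv_0_lt_compat; nra.
    - pose proof (TL1ab r (r ^ k) (r ^ n) H Ha Hb) as T.
      replace ((r ^ 2 - r ^ n) / (r ^ 2 * (1 - r ^ n)) * (Pr r x (S n) * (Nq r n k * x ^ k * (1 - r ^ k) / (1 - r ^ k * r ^ n))))
        with (Pr r x (S n) * Nq r n k * x ^ k * ((r ^ 2 - r ^ n) / (r ^ 2 * (1 - r ^ n)) * ((1 - r ^ k) / (1 - r ^ k * r ^ n)))) by (field; nra).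
      apply Rmult_le_compat_l; auto.
    - pose proof (TU1ab r (r ^ k) (r ^ n) H Ha Hb) as T.
      replace ((1 - r) / r ^ 2 * (Pr r x (S n) * (Nq r n k * x ^ k / (1 - r ^ k * r ^ n))) +
               / r * (Pr r x (S n) * (Nq r n k * x ^ k * (1 - r ^ k) / (1 - r ^ k * r ^ n))))
        with (Pr r x (S n) * Nq r n k * x ^ k * ((1 - r) / r ^ 2 / (1 - r ^ k * r ^ n) + / r * (1 - r ^ k) / (1 - r ^ k * r ^ n))) by (field; nra).
      apply Rmult_le_compat_l; auto. }
  assert (Hex : ex_series f1).
  { apply (@ex_series_le R_AbsRing R_CompleteNormedModule _ gU).
    intro k. change (Rabs (f1 k) <= gU k). destruct (Hterm k) as [A [_ B]]. rewrite Rabs_right; lra.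
    eexists; exact HgU. }
  destruct Hex as [S1 HS1].
  exists S1. split.
  - rewrite MKZD_r by (auto; lia). rewrite (Series_ext _ f1). rewrite (is_series_unique _ _ HS1). simpl. field. lra.
    intro k. unfold f1. rewrite rho1 by auto. reflexivity.
  - split.
    + replace ((r ^ 2 - r ^ n) / (r ^ 2 * (1 - r ^ n)) * x) with ((r ^ 2 - r ^ n) / (r ^ 2 * (1 - r ^ n)) * (Pr r x (S n) * (x / Pr r x (S n)))) by (field; lra).
      apply (series_cmp _ _ _ _ HgL HS1). intro k; apply Hterm.
    + replace ((1 - r) / r ^ 2 * ((1 - r ^ n * x) / (1 - r ^ n)) + / r * x)
        with ((1 - r) / r ^ 2 * (Pr r x (S n) * / ((1 - r ^ n) * Pr r x n)) + / r * (Pr r x (S n) * (x / Pr r x (S n)))).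
      apply (series_cmp _ _ _ _ HS1 HgU). intro k; apply Hterm.
      change (Pr r x (S n)) with (Pr r x n * (1 - r ^ n * x)). field. repeat split; try lra. nra. 
Qed.

Lemma P_e2 p r l x : 0 < p -> 0 < r < 1 -> 0 <= x < 1 ->
  exists S2, MKZD p (r * p) (S (S l)) (e_ 2) x = / p ^ 2 * S2 /\
    S2 <= (1+r)*(1-r)^2 / r^6 * ((1 - r ^ (S l) * x) * (1 - r ^ (S (S l)) * x) / ((1 - r ^ (S (S l))) * (1 - r ^ (S l))))
        + r*(1+r)^2*(1-r) / r^6 * (x * (1 - r ^ (S (S l)) * x) / (1 - r ^ (S (S l))))
        + r^4 / r^6 * x ^ 2.
Proof.
  intros Hp H Hx.
  set (n := S (S l)).
  set (C0 := (1+r)*(1-r)^2 / r^6). set (C1 := r*(1+r)^2*(1-r) / r^6). set (C2 := r^4 / r^6).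
  set (f2 := fun k => Pr r x (S n) * Nq r n k * x ^ k *
      ((1 - r ^ (S k)) / (1 - r ^ (S k + n + 1)) * ((1 - r ^ (S (S k))) / (1 - r ^ (S (S k) + n + 1))))).
  set (g2 := fun k => C0 * (Pr r x (S n) * (Nq r n k * x ^ k / ((1 - r ^ (n + k)) * (1 - r ^ (n + k - 1)))))
     + C1 * (Pr r x (S n) * (Nq r n k * x ^ k * (1 - r ^ k) / ((1 - r ^ (n + k)) * (1 - r ^ (n + k - 1)))))
     + C2 * (Pr r x (S n) * (Nq r n k * x ^ k * ((1 - r ^ k) * (1 - r ^ (k - 1))) / ((1 - r ^ (n + k)) * (1 - r ^ (n + k - 1)))))).
  pose proof (Pr_pos r x (S n) H Hx) as HP. pose proof (Pr_pos r x n H Hx) as HP0. pose proof (Pr_pos r x (S l) H Hx) as HP1.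
  omp r H n. omp r H (S l).
  assert (Hg : is_series g2 (C0 * (Pr r x (S n) * / ((1 - r ^ (S (S l))) * (1 - r ^ (S l)) * Pr r x (S l)))
                   + C1 * (Pr r x (S n) * (x / ((1 - r ^ (S (S l))) * Pr r x (S (S l)))))
                   + C2 * (Pr r x (S n) * (x ^ 2 / Pr r x (S n))))).
  { apply is_series_R_plus. apply is_series_R_plus.
    - apply is_series_R_scal; apply is_series_R_scal. apply (SF r x l H Hx).
    - apply is_series_R_scal; apply is_series_R_scal. apply (SE r x (S l) H Hx).
    - apply is_series_R_scal; apply is_series_R_scal. apply (SD r x n H Hx ltac:(unfold n; lia)). }
  assert (Hterm : forall k, 0 <= f2 k <= g2 k).
  { intro k. pose proof (W_nonneg r n k x H Hx) as HW.
    pose proof (pow_le_one r k ltac:(lra)) as Ha.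
    set (d := r ^ (n + k - 1)).
    assert (Hd : 0 <= d <= r).
    { unfold d. replace (n + k - 1)%nat with (S (l + k)) by (unfold n; lia). simpl.
      pose proof (pow_le_one r (l + k) ltac:(lra)). nra. }
    assert (E1 : r ^ (S k + n + 1) = r ^ 3 * d) by (unfold d; rewrite <- pow_add; f_equal; unfold n; lia).
    assert (E2 : r ^ (S (S k) + n + 1) = r ^ 4 * d) by (unfold d; rewrite <- pow_add; f_equal; unfold n; lia).
    assert (E3 : r ^ (n + k) = r * d) by (unfold d; rewrite <- (pow_1 r) at 2; rewrite <- pow_add; f_equal; unfold n; lia).
    assert (E4 : r ^ (S (S k)) = r ^ 2 * r ^ k) by (rewrite <- pow_add; reflexivity).
    assert (E5 : r ^ (S k) = r * r ^ k) by reflexivity.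
    assert (EN : (1 - r * r ^ k) * (1 - r ^ 2 * r ^ k) = (1+r)*(1-r)^2 + r*(1+r)^2*(1-r)*(1-r ^ k) + r^4*(1-r ^ k)*(1-r ^ (k - 1))).
    { destruct k. simpl. ring. replace (S k - 1)%nat with k by lia. simpl. ring. }
    pose proof (TU2acd r (r ^ k) (r ^ (k - 1)) d H Ha Hd EN) as T.
    pose proof (pow_le_one r 3 ltac:(lra)). pose proof (pow_le_one r 4 ltac:(lra)).
    assert (0 < 1 - r ^ 3 * d) by nra. assert (0 < 1 - r ^ 4 * d) by nra.
    assert (0 < 1 - r * d) by nra. assert (0 < 1 - d) by nra.
    assert (0 < r ^ 6) by (apply pow_lt; lra).
    unfold f2, g2. rewrite E1, E2, E3, E4, E5. fold d. split.
    - apply Rmult_le_pos. auto. apply Rmult_le_pos; (apply Rmult_le_pos; [nra | left; apply Rinv_0_lt_compat; nra]).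
    - unfold C0, C1, C2.
      replace ((1 + r) * (1 - r) ^ 2 / r ^ 6 * (Pr r x (S n) * (Nq r n k * x ^ k / ((1 - r * d) * (1 - d)))) +
        r * (1 + r) ^ 2 * (1 - r) / r ^ 6 * (Pr r x (S n) * (Nq r n k * x ^ k * (1 - r ^ k) / ((1 - r * d) * (1 - d)))) +
        r ^ 4 / r ^ 6 * (Pr r x (S n) * (Nq r n k * x ^ k * ((1 - r ^ k) * (1 - r ^ (k - 1))) / ((1 - r * d) * (1 - d)))))
       with (Pr r x (S n) * Nq r n k * x ^ k * (((1+r)*(1-r)^2 + r*(1+r)^2*(1-r)*(1-r ^ k) + r^4*(1-r ^ k)*(1-r ^ (k - 1))) / (r ^ 6 * ((1 - r * d) * (1 - d)))))
       by (field; repeat split; lra).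
      apply Rmult_le_compat_l; auto. }
  assert (Hex : ex_series f2).
  { apply (@ex_series_le R_AbsRing R_CompleteNormedModule _ g2).
    intro k. change (Rabs (f2 k) <= g2 k). destruct (Hterm k) as [A B]. rewrite Rabs_right; lra.
    eexists; exact Hg. }
  destruct Hex as [S2 HS2].
  exists S2. split.
  - rewrite MKZD_r by (auto; unfold n; lia). rewrite (Series_ext _ f2). rewrite (is_series_unique _ _ HS2). reflexivity.
    intro k. unfold f2. rewrite rho2 by auto. reflexivity.
  - pose proof (series_cmp _ _ _ _ HS2 Hg (fun k => proj2 (Hterm k))) as HH.
    eapply Rle_trans. exact HH. right. fold C0 C1 C2.
    change (Pr r x (S n)) with (Pr r x (S l) * (1 - r ^ (S l) * x) * (1 - r ^ (S (S l)) * x)).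
    change (Pr r x (S (S l))) with (Pr r x (S l) * (1 - r ^ (S l) * x)).
    assert (0 < 1 - r ^ (S l) * x). { pose proof (rpow_bounds r (S l) H ltac:(lia)). nra. }
    assert (0 < 1 - r ^ (S (S l)) * x). { pose proof (rpow_bounds r (S (S l)) H ltac:(lia)). nra. }
    unfold n in *. field. repeat split; lra.
Qed.

Lemma pq_num_le p q n : 0 < q -> q < p -> p <= 1 -> 0 <= pq_num p q n <= (1 - q ^ n) / (1 - q).
Proof.
  intros Hq Hqp Hp. induction n.
  - unfold pq_num. simpl. replace ((1 - 1) / (p - q)) with 0 by (field; lra). replace ((1 - 1) / (1 - q)) with 0 by (field; lra). lra.
  - assert (E : pq_num p q (S n) = p * pq_num p q n + q ^ n) by (unfold pq_num; simpl; field; lra).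
    rewrite E. pose proof (pow_le q n ltac:(lra)).
    assert (p * pq_num p q n <= 1 * pq_num p q n) by (apply Rmult_le_compat_r; lra).
    assert (p * pq_num p q n >= 0) by (apply Rle_ge, Rmult_le_pos; lra).
    replace ((1 - q ^ S n) / (1 - q)) with ((1 - q ^ n) / (1 - q) + q ^ n) by (simpl; field; lra).
    lra.
Qed.

Lemma pow_diff_nonneg p q k : 0 <= q <= p -> 0 <= p ^ k - q ^ k.
Proof. intros. pose proof (pow_incr q p k H). lra. Qed.

Theorem theorem1 (p q : R) (n : nat) :
  0 < q -> q < p -> p <= 1 -> (1 <= n)%nat ->
  forall x : R, 0 <= x <= 1 ->
    MKZD p q n (e_ 0) x = 1 /\
    (x / q ^ 2 * (1 - (q + 1) / pq_num p q n) <= MKZD p q n (e_ 1) x /\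
     MKZD p q n (e_ 1) x <= x / q + (p ^ n - q ^ n * x) / (q ^ 2 * pq_num p q n)) /\
    ((2 <= n)%nat ->
     MKZD p q n (e_ 2) x <=
       x ^ 2 / q ^ 2
       + (p + q) ^ 2 / q ^ 5 * ((p ^ n - q ^ n * x) / pq_num p q n) * x
       + p * (p + q) / q ^ 6 *
         ((p ^ n - q ^ n * x) * (p ^ (n - 1) - q ^ (n - 1) * x)
          / (pq_num p q n * pq_num p q (n - 1)))).
Proof.
  intros Hq Hqp Hp1 Hn x Hx.
  assert (Hp : 0 < p) by lra.
  destruct n as [|m]. lia.
  pose proof (pq_num_le p q (S m) Hq Hqp Hp1) as HNle.
  destruct (Rlt_or_le x 1) as [Hx1 | Hx1].
  2:{ assert (x = 1) by lra. subst x. unfold MKZD. destruct (Rlt_dec 1 1) as [Hc|_]. lra.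
      unfold e_. rewrite !pow1.
      pose (r := q / p). assert (Eq : q = r * p) by (unfold r; field; lra).
      assert (Hr : 0 < r < 1). { split. unfold r. apply Rdiv_lt_0_compat; lra. apply (Rmult_lt_reg_r p); [lra|]. rewrite <- Eq. lra. }
      clearbody r.
      assert (HN : 0 < pq_num p q (S m)). { rewrite Eq, pq_num_r by auto. pose proof (pow_lt p m Hp). omp r Hr (S m).
        apply Rmult_lt_0_compat. apply Rmult_lt_0_compat; lra. apply Rinv_0_lt_compat; lra. }
      assert (Hiq : 1 <= / q). { apply (Rmult_le_reg_l q); [lra|]. rewrite Rinv_r; lra. }
      assert (Hq2 : 0 < q ^ 2) by (apply pow_lt; lra).
      assert (Hiq2 : 1 <= 1 / q ^ 2). { apply (Rmult_le_reg_l (q ^ 2)); [lra|]. unfold Rdiv. rewrite Rmult_1_l, Rinv_r by lra. simpl. nra. }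
      pose proof (pow_diff_nonneg p q (S m) ltac:(lra)) as Hd1.
      split; [reflexivity|]. split. split.
      - assert (HNq : pq_num p q (S m) * (1 - q) <= 1).
        { destruct HNle as [_ HNle]. pose proof (pow_le q (S m) ltac:(lra)).
          apply (Rmult_le_compat_r (1 - q)) in HNle; [|lra]. replace ((1 - q ^ S m) / (1 - q) * (1 - q)) with (1 - q ^ S m) in HNle by (field; lra). lra. }
        apply (le_by_diff _ _ ((q + 1) * (1 - pq_num p q (S m) * (1 - q))) (q ^ 2 * pq_num p q (S m))).
        field. lra. apply Rmult_le_pos; lra. apply Rmult_lt_0_compat; lra.
      - assert (0 <= (p ^ S m - q ^ S m * 1) / (q ^ 2 * pq_num p q (S m))).
        { apply Rmult_le_pos. lra. left; apply Rinv_0_lt_compat, Rmult_lt_0_compat; lra. }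
        unfold Rdiv at 1. lra.
      - intro Hn2. destruct m as [|l]. lia. replace (S (S l) - 1)%nat with (S l) by lia.
        pose proof (pow_diff_nonneg p q (S l) ltac:(lra)) as Hd2.
        assert (HN2 : 0 < pq_num p q (S l)). { rewrite Eq, pq_num_r by auto. pose proof (pow_lt p l Hp). omp r Hr (S l).
          apply Rmult_lt_0_compat. apply Rmult_lt_0_compat; lra. apply Rinv_0_lt_compat; lra. }
        assert (0 <= (p + q) ^ 2 / q ^ 5 * ((p ^ S (S l) - q ^ S (S l) * 1) / pq_num p q (S (S l))) * 1).
        { rewrite !Rmult_1_r. apply Rmult_le_pos. apply Rmult_le_pos. apply pow_le; lra. left; apply Rinv_0_lt_compat, pow_lt; lra.
          apply Rmult_le_pos. lra. left; apply Rinv_0_lt_compat; lra. }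
        assert (0 <= p * (p + q) / q ^ 6 * ((p ^ S (S l) - q ^ S (S l) * 1) * (p ^ S l - q ^ S l * 1) / (pq_num p q (S (S l)) * pq_num p q (S l)))).
        { rewrite !Rmult_1_r. apply Rmult_le_pos. apply Rmult_le_pos. apply Rmult_le_pos; lra. left; apply Rinv_0_lt_compat, pow_lt; lra.
          apply Rmult_le_pos. apply Rmult_le_pos; lra. left; apply Rinv_0_lt_compat, Rmult_lt_0_compat; lra. }
        lra. }
  assert (Hx' : 0 <= x < 1) by lra.
  pose (r := q / p). assert (Eq : q = r * p) by (unfold r; field; lra).
  assert (Hr : 0 < r < 1). { split. unfold r. apply Rdiv_lt_0_compat; lra. apply (Rmult_lt_reg_r p); [lra|]. rewrite <- Eq. lra. }
  clearbody r. subst q.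
  pose proof (pow_lt p m Hp) as HPm. omp r Hr (S m).
  assert (HN : pq_num p (r * p) (S m) = p ^ m * (1 - r ^ S m) / (1 - r)) by (apply pq_num_r; auto).
  split. apply P_e0; auto; lia.
  split.
  - destruct (P_e1 p r (S m) x Hp Hr ltac:(lia) Hx') as [S1 [E [L U]]]. rewrite E. split.
    + eapply Rle_trans. 2: apply (Rmult_le_compat_l (/ p)); [left; apply Rinv_0_lt_compat; lra | exact L].
      rewrite HN.
      set (P := p ^ m). set (b := r ^ S m). assert (HP0 : 0 < P) by exact HPm.
      assert (Hb : 0 < b < 1) by (apply rpow_bounds; auto; lia).
      assert (HP1 : P <= 1) by (apply pow_le_one; lra).
      pose proof (bern1 r (S m) Hr) as A. pose proof (bern2 p m ltac:(lra)) as B. fold P b in A, B.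
      change (p ^ S m) with (p * P) in B.
      pose proof (pos_INR (S m)).
      apply (le_by_diff _ _ (x * ((1 - r) * (1 - p * P) + (1 - r) * r * p * (1 - P) - P * (1 - b) * (1 - p)))
               (r ^ 2 * p ^ 2 * P * (1 - b))).
      field. repeat split; try lra.
      apply Rmult_le_pos. lra.
      assert (P * (1 - p) * (1 - b) <= P * (1 - p) * (INR (S m) * (1 - r))) by (apply Rmult_le_compat_l; nra).
      assert ((1 - r) * (INR (S m) * (1 - p) * P) <= (1 - r) * (1 - p * P)) by (apply Rmult_le_compat_l; lra).
      assert (0 <= (1 - r) * r * p * (1 - P)) by (apply Rmult_le_pos; [apply Rmult_le_pos; [apply Rmult_le_pos|]|]; lra).
      nra.
      apply Rmult_lt_0_compat. apply Rmult_lt_0_compat. apply Rmult_lt_0_compat. apply pow_lt; lra. apply pow_lt; lra. lra. lra.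
    + eapply Rle_trans. apply (Rmult_le_compat_l (/ p)); [left; apply Rinv_0_lt_compat; lra | exact U].
      right. rewrite HN. rewrite Rpow_mult_distr. simpl pow in *. field. repeat split; lra. 
  - intro Hn2. destruct m as [|l]. lia. replace (S (S l) - 1)%nat with (S l) by lia.
    destruct (P_e2 p r l x Hp Hr Hx') as [S2 [E U]]. rewrite E.
    eapply Rle_trans. apply (Rmult_le_compat_l (/ p ^ 2)); [left; apply Rinv_0_lt_compat, pow_lt; lra | exact U].
    right. rewrite HN. rewrite (pq_num_r p r l Hp Hr). omp r Hr (S l). pose proof (pow_lt p l Hp).
    rewrite !Rpow_mult_distr. simpl pow in *. field. repeat split; try lra.
Qed.
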